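(* Let $q$ be a prime power, $s\ge 2$, $d\ge 0$ integers, and let $P\in\mathbb{F}_q[x_1,\dots,x_s]$ be a homogeneous polynomial with $\deg(P)=d$. Then there exist $\lfloor q/(d+1)\rfloor^{s-1}$ subsets of $\mathbb{F}_q^s$, each of size $(d+1)^{s-1}$, each of which is an interpolation set of $P$, and which are pairwise disjoint under multiplication.
   Context: A polynomial is homogeneous if all its monomials have the same total degree. A set $R\subseteq\mathbb{F}_q^s$ is an interpolation set of the homogeneous polynomial $P$ of degree $d$ if for every homogeneous polynomial $Q$ of degree $d$ with $P(\boldsymbol{x})=Q(\boldsymbol{x})$ for all $\boldsymbol{x}\in R$, one has $P(\boldsymbol{x})=Q(\boldsymbol{x})$ for all $\boldsymbol{x}\in\mathbb{F}_q^s$. Two sets $S_1,S_2\subseteq\mathbb{F}_q^s$ are disjoint under multiplication if for every $\boldsymbol{x}\in S_1$ and every $\alpha\in\mathbb{F}_q\setminus\{0\}$, $\alpha\boldsymbol{x}\notin S_2$. *)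

(* Defs.v *)
From mathcomp Require Import all_boot all_order all_algebra.
From mathcomp Require Import mpoly.
Set Implicit Arguments. Unset Strict Implicit. Unset Printing Implicit Defensive.
Import GRing.Theory.
Local Open Scope ring_scope.

Notation point F s := {ffun 'I_s -> F}.

Definition interpolation_set (F : finFieldType) (s d : nat)
    (P : {mpoly F[s]}) (R : {set point F s}) : Prop :=
  forall Q : {mpoly F[s]}, Q \is d.-homog ->
    (forall x, x \in R -> P.@[x] = Q.@[x]) ->
    forall x : point F s, P.@[x] = Q.@[x].

Definition pscale (F : fieldType) (s : nat) (a : F) (x : point F s)
  : point F s := [ffun i => a * x i].

Definition disjoint_under_mul (F : finFieldType) (s : nat)
    (S1 S2 : {set point F s}) : Prop :=
  forall x, x \in S1 -> forall a : F, a != 0 -> pscale a x \notin S2.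

(* Main.v *)
Require Import Defs.
From mathcomp Require Import all_boot all_order all_algebra.
From mathcomp Require Import mpoly.
From mathcomp Require Import zify.
Set Implicit Arguments. Unset Strict Implicit. Unset Printing Implicit Defensive.
Import GRing.Theory.
Local Open Scope ring_scope.
Local Notation widen := (widen_ord (leqnSn _)).
Section Grid.
Variable F : fieldType.

Definition mtrunc n (m : 'X_{1..n.+1}) : 'X_{1..n} := [multinom m (widen i) | i < n].
Definition mjoin n (M : 'X_{1..n}) (j : nat) : 'X_{1..n.+1} :=
  [multinom (if unlift ord_max i is Some k then M k else j) | i < n.+1].
Definition vjoin n (v : 'I_n -> F) (t : F) : 'I_n.+1 -> F :=
  fun i => if unlift ord_max i is Some k then v k else t.

Lemma unlift_widen n (i : 'I_n) : unlift ord_max (widen i) = Some i.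
Proof.
have -> : widen i = lift ord_max i by apply/val_inj; rewrite /= /bump leqNgt ltn_ord.
by rewrite liftK.
Qed.

Lemma mjoin_eq n (m : 'X_{1..n.+1}) M j :
  (m == mjoin M j) = (m ord_max == j) && (mtrunc m == M).
Proof.
apply/eqP/andP => [->|[/eqP h1 /eqP h2]].
  split; first by rewrite mnmE unlift_none.
  by apply/eqP/mnmP => i; rewrite !mnmE unlift_widen.
apply/mnmP => i; rewrite mnmE.
case: unliftP => [k ->|->] //.
rewrite -h2 mnmE; congr (m _); apply/val_inj; rewrite /= /bump leqNgt ltn_ord.
by [].
Qed.

Lemma mtrunc_join n (M : 'X_{1..n}) j : mtrunc (mjoin M j) = M.
Proof. by apply/mnmP => i; rewrite !mnmE unlift_widen. Qed.

Definition ctr n (p : {mpoly F[n.+1]}) (P : pred 'X_{1..n.+1}) : {mpoly F[n]} :=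
  \sum_(m <- msupp p | P m) p@_m *: 'X_[mtrunc m].

Lemma ctr_coef n (p : {mpoly F[n.+1]}) P M :
  (ctr p P)@_M = \sum_(m <- msupp p | P m) p@_m * (mtrunc m == M)%:R.
Proof.
rewrite /ctr raddf_sum /=; apply: eq_bigr => m _.
by rewrite mcoeffZ mcoeffX.
Qed.

Lemma ctr_eval n (p : {mpoly F[n.+1]}) P v :
  (ctr p P).@[v] = \sum_(m <- msupp p | P m) p@_m * \prod_(i < n) v i ^+ m (widen i).
Proof.
rewrite /ctr raddf_sum /=; apply: eq_bigr => m _.
rewrite mevalZ mevalX; congr (_ * _); apply: eq_bigr => i _; by rewrite mnmE.
Qed.

Lemma coef_sel n (p : {mpoly F[n]}) M :
  \sum_(m <- msupp p) p@_m * (m == M)%:R = p@_M.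
Proof.
rewrite {3}(mpolyE p) raddf_sum /=; apply: eq_bigr => m _.
by rewrite mcoeffZ mcoeffX.
Qed.

Lemma eval_join n (p : {mpoly F[n.+1]}) v t :
  p.@[vjoin v t] = \sum_(m <- msupp p) p@_m * ((\prod_(i < n) v i ^+ m (widen i)) * t ^+ m ord_max).
Proof.
rewrite mevalE; apply: eq_bigr => m _; congr (_ * _).
rewrite big_ord_recr /= /vjoin unlift_none; congr (_ * _).
by apply: eq_bigr => i _; rewrite unlift_widen.
Qed.

Lemma widen_lift n (k : 'I_n) : lift ord_max k = widen k.
Proof. by apply/val_inj; rewrite /= /bump leqNgt ltn_ord. Qed.

Lemma ctr_last_coef n (p : {mpoly F[n.+1]}) j M :
  (ctr p (fun m => m ord_max == j))@_M = p@_(mjoin M j).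
Proof.
rewrite ctr_coef big_mkcond /= -coef_sel; apply: eq_bigr => m _.
rewrite mjoin_eq; case: (m ord_max == j) => /=; by rewrite ?mulr0.
Qed.

Lemma grid n d (a : 'I_n -> 'I_d.+1 -> F) (ainj : forall i, injective (a i))
  (p : {mpoly F[n]}) :
  (forall m, m \in msupp p -> forall i, (m i <= d)%N) ->
  (forall g : {ffun 'I_n -> 'I_d.+1}, p.@[fun i => a i (g i)] = 0) -> p = 0.
Proof.
elim: n a ainj p => [|n IH] a ainj p hdeg hev.
  have hs : (msize p <= 1)%N.
    rewrite msizeE; apply/bigmax_leqP_seq => m _ _.
    by rewrite mdegE big_ord0.
  have := hev [ffun i => ord0]; rewrite (msize1_polyC hs) mevalC => ->.
  exact: mpolyC0.
pose c j := ctr p (fun m => m ord_max == j).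
have c0 : forall j, c j = 0.
  move=> j; case: (leqP j d) => hj; last first.
    apply/mpolyP => M; rewrite ctr_last_coef mcoeff0.
    apply/eqP; rewrite -[_ == 0]negbK -mcoeff_msupp; apply/negP => /hdeg /(_ ord_max).
    by rewrite mnmE unlift_none leqNgt hj.
  apply: (IH (fun i => a (widen i))) => [i|m|g'].
  - exact: ainj.
  - rewrite mcoeff_msupp ctr_last_coef -mcoeff_msupp => /hdeg h i.
    by have := h (widen i); rewrite mnmE unlift_widen.
  pose x' := fun i => a (widen i) (g' i).
  pose u := \poly_(k < d.+1) (c k).@[x'].
  suff hu : u = 0.
    have := coef_poly (d.+1) (fun k => (c k).@[x']) j.
    rewrite -/u hu coef0 ltnS hj => h; exact/esym/h.
  apply/eqP; apply/negP => /negP unz.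
  have := max_poly_roots unz (rs := [seq a ord_max r | r <- enum 'I_d.+1]).
  rewrite map_inj_uniq ?enum_uniq // size_map size_enum_ord.
  have -> : all (root u) [seq a ord_max r | r <- enum 'I_d.+1].
    apply/allP => t /mapP [r _ ->]; apply/rootP.
    rewrite horner_poly.
    have hg := hev [ffun i => if unlift ord_max i is Some k then g' k else r].
    rewrite -[RHS]hg (@meval_eq _ _ _ (vjoin x' (a ord_max r))); last first.
      move=> i; rewrite /vjoin ffunE; case: unliftP => [k ->|->] //.
      by rewrite widen_lift.
    rewrite eval_join.
    under eq_bigr do rewrite ctr_eval big_mkcond /= mulr_suml.
    rewrite exchange_big /= big_seq [RHS]big_seq; apply: eq_bigr => m hm.
    have hl : (m ord_max < d.+1)%N by rewrite ltnS; apply: hdeg.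
    rewrite (bigD1 (Ordinal hl)) //= eqxx [X in _ + X]big1 ?addr0 ?mulrA //.
    move=> k hk; case: eqP => [e|]; last by rewrite mul0r.
    by move: hk; rewrite -val_eqE /= e eqxx.
  move=> /(_ isT isT); by rewrite ltnNge size_poly.
apply/mpolyP => m; rewrite mcoeff0.
have -> : m = mjoin (mtrunc m) (m ord_max) by apply/eqP; rewrite mjoin_eq !eqxx.
by rewrite -ctr_last_coef -/(c _) c0 mcoeff0.
Qed.

Lemma mdeg_split n (m : 'X_{1..n.+1}) : mdeg m = (mdeg (mtrunc m) + m ord_max)%N.
Proof.
rewrite !mdegE big_ord_recr /=; congr (_ + _)%N.
by apply: eq_bigr => i _; rewrite mnmE.
Qed.

Lemma mnm_le_mdeg n (m : 'X_{1..n}) i : (m i <= mdeg m)%N.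
Proof. by rewrite mdegE (bigD1 i) //= leq_addr. Qed.

Lemma homog_zero n d (a : 'I_n -> 'I_d.+1 -> F) (ainj : forall i, injective (a i))
  (H : {mpoly F[n.+1]}) : H \is d.-homog ->
  (forall g : {ffun 'I_n -> 'I_d.+1}, H.@[vjoin (fun i => a i (g i)) 1] = 0) -> H = 0.
Proof.
move=> /dhomogP hH hev.
pose G := ctr H xpredT.
have claim : forall m, m \in msupp H -> G@_(mtrunc m) = H@_m.
  move=> m hm; rewrite ctr_coef -coef_sel big_seq [RHS]big_seq.
  apply: eq_bigr => m0 hm0; suff -> : (mtrunc m0 == mtrunc m) = (m0 == m) by [].
  apply/idP/idP => [/eqP e|/eqP -> //].
  have e2 : m0 ord_max = m ord_max.
    have h1 : mdeg m0 = d := hH _ hm0.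
    have h2 : mdeg m = d := hH _ hm.
    by move: h1; rewrite -h2 !mdeg_split e => /eqP; rewrite eqn_add2l => /eqP.
  rewrite [X in m0 == X](_ : m = mjoin (mtrunc m) (m ord_max)); last by apply/eqP; rewrite mjoin_eq !eqxx.
  by rewrite mjoin_eq e2 e !eqxx.
have G0 : G = 0.
  apply: (grid ainj) => [m' hm' i|g].
    move: hm'; rewrite mcoeff_msupp ctr_coef.
    case: (boolP (has (fun m0 => mtrunc m0 == m') (msupp H))) => [/hasP [m0 hm0 /eqP <-]|hn].
      by move=> _; have h1 : mdeg m0 = d := hH _ hm0; rewrite mnmE -h1 mnm_le_mdeg.
    rewrite big1_seq ?eqxx // => m0 /= hm0.
    case: eqP => e; last by rewrite mulr0.
    by move: hn => /hasP; case; exists m0 => //; rewrite e.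
  rewrite ctr_eval -[RHS](hev g) eval_join; apply: eq_bigr => m _.
  by rewrite expr1n mulr1.
apply/mpolyP => m; rewrite mcoeff0.
case: (boolP (m \in msupp H)) => [hm|].
  by rewrite -claim // G0 mcoeff0.
by rewrite mcoeff_msupp negbK => /eqP.
Qed.
End Grid.
Theorem lemma3 (q : nat) (F : finFieldType) (hq : #|F| = q)
    (s d : nat) (hs : (2 <= s)%N) (P : {mpoly F[s]})
    (hP : P \is d.-homog) (hdeg : msize P = d.+1) :
  exists S : 'I_((q %/ d.+1) ^ s.-1) -> {set point F s},
    [/\ (forall i, #|S i| = (d.+1 ^ s.-1)%N),
        (forall i, interpolation_set d P (S i)) &
        (forall i j, i != j -> disjoint_under_mul (S i) (S j))].
Proof.
case: s hs P hP hdeg => [|n] // hs P hP _ /=.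
set k := (q %/ d.+1)%N.
pose f : nat -> F := fun t => nth 0 (enum F) t.
have finj : forall t1 t2, (t1 < q)%N -> (t2 < q)%N -> f t1 = f t2 -> t1 = t2.
  move=> t1 t2 h1 h2 /eqP; rewrite /f nth_uniq ?enum_uniq // -?cardE ?hq //.
  by move/eqP.
have E : #|{ffun 'I_n -> 'I_k}| = (k ^ n)%N by rewrite card_ffun !card_ord.
pose dig (i : 'I_(k ^ n)) : {ffun 'I_n -> 'I_k} := enum_val (cast_ord (esym E) i).
have diginj : injective dig.
  by move=> i j /enum_val_inj /cast_ord_inj.
have bnd : forall (b : 'I_k) (r : 'I_d.+1), (b * d.+1 + r < q)%N.
  move=> b r; have := leq_trunc_div q d.+1; have := ltn_ord b; have := ltn_ord r.
  rewrite -/k; nia.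
pose a (i : 'I_(k ^ n)) (j : 'I_n) (r : 'I_d.+1) : F := f (dig i j * d.+1 + r)%N.
have ainj : forall i j, injective (a i j).
  move=> i j r r' /finj => /(_ (bnd _ _) (bnd _ _)) /addnI e; exact: val_inj.
pose pt i (g : {ffun 'I_n -> 'I_d.+1}) : point F n.+1 :=
  [ffun t => vjoin (fun j => a i j (g j)) 1 t].
have ptinj : forall i, injective (pt i).
  move=> i g g' /ffunP e; apply/ffunP => j; have := e (widen_ord (leqnSn _) j).
  by rewrite !ffunE /vjoin unlift_widen => /ainj.
exists (fun i => [set pt i g | g : {ffun 'I_n -> 'I_d.+1}]); split.
- by move=> i; rewrite card_imset // card_ffun !card_ord.
- move=> i Q hQ hag x.
  have H0 : P - Q = 0.
    apply: (homog_zero (ainj i) (rpredB hP hQ)) => g.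
    rewrite mevalB; apply/eqP; rewrite subr_eq0; apply/eqP.
    have hm : pt i g \in [set pt i g | g : {ffun 'I_n -> 'I_d.+1}] by apply/imsetP; exists g.
    have := hag (pt i g) hm.
    have ev : forall R : {mpoly F[n.+1]}, R.@[pt i g] = R.@[vjoin (fun j => a i j (g j)) 1].
      by move=> R; apply: meval_eq => t; rewrite ffunE.
    by rewrite !ev.
  by apply/eqP; rewrite -subr_eq0 -mevalB H0 meval0.
- move=> i j hij x /imsetP [g _ ->] c hc; apply/imsetP => [[g' _ e]].
  move/ffunP: e => e.
  have c1 : c = 1.
    by have := e ord_max; rewrite !ffunE /vjoin unlift_none mulr1.
  move/negP: hij; apply; apply/eqP/diginj/ffunP => t.
  have := e (widen_ord (leqnSn _) t); rewrite !ffunE /vjoin unlift_widen c1 mul1r.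
  move=> /finj => /(_ (bnd _ _) (bnd _ _)) h; apply: val_inj => /=.
  move: h => /(congr1 (fun z => z %/ d.+1)%N) /=.
  by rewrite !divnMDl // !divn_small // !addn0.
Qed.
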